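(* Let $u$ be a fast decreasing distribution on $\mathbb R^D$ (acting on $\mathbb C[\boldsymbol x]$), $\mathcal Q_2\in\mathbb C[\boldsymbol x]$ of degree $m_2$ with $Z(\mathcal Q_2)\cap\operatorname{supp}u=\varnothing$, and $\check u$ a linear functional on $\mathbb C[\boldsymbol x]$ with $\mathcal Q_2\check u=u$; assume $u,\check u$ quasi-definite, and let $R=\langle\check u,P(\boldsymbol x)\chi(\boldsymbol x)^\top\rangle$. Let $k\ge m_2$ and let $\mathcal M_k=\{\boldsymbol\beta_1,\dots,\boldsymbol\beta_r\}$, $r=N_{k-1}-N_{k-m_2-1}$, be a poised set of distinct multi-indices with $|\boldsymbol\beta_i|<k$, i.e. the matrix with block rows $(R_{[l],\boldsymbol\beta_1},\dots,R_{[l],\boldsymbol\beta_r})$, $l=k-m_2,\dots,k-1$, is nonsingular. Then $$\check P_{[k]}(\boldsymbol x)=\Theta_*\begin{pmatrix}R_{[k-m_2],\boldsymbol\beta_1}&\cdots&R_{[k-m_2],\boldsymbol\beta_r}&P_{[k-m_2]}(\boldsymbol x)\\ \vdots&&\vdots&\vdots\\ R_{[k],\boldsymbol\beta_1}&\cdots&R_{[k],\boldsymbol\beta_r}&P_{[k]}(\boldsymbol x)\end{pmatrix},$$ $$\check H_{[k]}\Big(\big(\mathcal Q_2(\boldsymbol\Lambda)\big)_{[k-m_2],[k]}\Big)^\top=\Theta_*\begin{pmatrix}R_{[k-m_2],\boldsymbol\beta_1}&\cdots&R_{[k-m_2],\boldsymbol\beta_r}&H_{[k-m_2]}\\ R_{[k-m_2+1],\boldsymbol\beta_1}&\cdots&R_{[k-m_2+1],\boldsymbol\beta_r}&0\\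 \vdots&&\vdots&\vdots\\ R_{[k],\boldsymbol\beta_1}&\cdots&R_{[k],\boldsymbol\beta_r}&0\end{pmatrix},$$ $$\check H_{[k]}=\Theta_*\begin{pmatrix}R_{[k-m_2],\boldsymbol\beta_1}&\cdots&R_{[k-m_2],\boldsymbol\beta_r}&R_{[k-m_2],[k]}\\ \vdots&&\vdots&\vdots\\ R_{[k],\boldsymbol\beta_1}&\cdots&R_{[k],\boldsymbol\beta_r}&R_{[k],[k]}\end{pmatrix}.$$
   Context: $[k]=\{\boldsymbol\alpha\in\mathbb Z_+^D:|\boldsymbol\alpha|=k\}$, $|[k]|=\binom{D+k-1}{k}$, $N_k=\binom{D+k}{D}$, $N_{-1}=0$. Multi-indices ordered by graded lexicographic order; $\chi(\boldsymbol x)$ semi-infinite vector of monomials in that order, blocks $\chi_{[k]}$; semi-infinite matrices have blocks $A_{[k],[l]}\in\mathbb C^{|[k]|\times|[l]|}$; $A_{[l],\boldsymbol\beta}$ is the column of block row $[l]$ indexed by $\boldsymbol\beta$; zero blocks $0$ have the appropriate size. Spectral matrices $(\Lambda_a)_{\boldsymbol\alpha,\boldsymbol\beta}=\delta_{\boldsymbol\alpha+\boldsymbol e_a,\boldsymbol\beta}$, $\mathcal Q_2(\boldsymbol\Lambda)=\mathcal Q_2(\Lambda_1,\dots,\Lambda_D)$. For a linear functional $u$, $\langle Qu,P\rangle:=\langle u,QP\rangle$; moment matrix $G=\langle u,\chi\chi^\top\rangle$; quasi-definite: all block truncations nonsingular, then $G=S^{-1}HS^{-\top}$, $S$ block lower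 unitriangular, $H$ block diagonal with blocks $H_{[k]}$, monic orthogonal polynomials $P=S\chi$ with blocks $P_{[k]}$; checked symbols refer to $\check u$. Last quasi-determinant: $\Theta_*\begin{pmatrix}A&B\\C&D\end{pmatrix}=D-CA^{-1}B$, the last block row/column being the last displayed ones. *)

(* Defs.v *)
From HB Require Import structures.
From mathcomp Require Import all_boot all_order all_algebra.
From mathcomp Require Import reals.
From mathcomp Require Import complex.
From mathcomp Require Import mpoly.

Set Implicit Arguments.
Unset Strict Implicit.
Unset Printing Implicit Defensive.

Import Order.TTheory GRing.Theory Num.Theory.
Local Open Scope ring_scope.

(* Multi-indices alpha in Z_+^D are the monomials 'X_{1..D}; |alpha| = mdeg. *)

(* Lexicographic order (x_1 > x_2 > ... > x_D) used inside a homogeneous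
   block: a precedes b iff a = b or, at the first index where they differ,
   a has the larger exponent. *)
Definition lexge (D : nat) (a b : 'X_{1..D}) : bool :=
  (a == b) ||
  [exists i : 'I_D, (b i < a i)%N && [forall j : 'I_D, (j < i)%N ==> (a j == b j)]].

Definition blk (D k : nat) : seq 'X_{1..D} :=
  sort (@lexge D)
    [seq bmnm m | m <- enum {: 'X_{1..D < k.+1}} & mdeg (bmnm m) == k].

Definition grl (D a b : nat) : seq 'X_{1..D} :=
  flatten [seq blk D l | l <- iota a (b - a)].

(* Semi-infinite matrices, indexed by multi-indices. *)
Definition smat (D : nat) (T : Type) := 'X_{1..D} -> 'X_{1..D} -> T.

Definition subml (D : nat) (T : Type) (A : smat D T) (rs cs : seq 'X_{1..D})
  : 'M[T]_(size rs, size cs) :=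
  \matrix_(i, j) A (nth 0%MM rs i) (nth 0%MM cs j).

Definition subm (D : nat) (T : Type) (A : smat D T) (rs : seq 'X_{1..D}) (n : nat)
  (beta : 'I_n -> 'X_{1..D}) : 'M[T]_(size rs, n) :=
  \matrix_(i, j) A (nth 0%MM rs i) (beta j).

Definition pcol (D : nat) (T : Type) (P : 'X_{1..D} -> T) (rs : seq 'X_{1..D})
  : 'cV[T]_(size rs) :=
  \col_i P (nth 0%MM rs i).

(* Last quasi-determinant  Theta_* ( A B ; C Dm ) = Dm - C A^{-1} B. *)
Definition qdet (T : comUnitRingType) (r p q : nat) (A : 'M[T]_r) (B : 'M[T]_(r, p))
  (C : 'M[T]_(q, r)) (Dm : 'M[T]_(q, p)) : 'M[T]_(q, p) :=
  Dm - C *m invmx A *m B.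

Definition mpC_mx (D : nat) (F : fieldType) (m n : nat) (A : 'M[F]_(m, n))
  : 'M[{mpoly F[D]}]_(m, n) :=
  map_mx (fun c : F => c%:MP) A.

Definition lin_fun (D : nat) (F : fieldType) (u : {mpoly F[D]} -> F) : Prop :=
  forall (c : F) (p q : {mpoly F[D]}), u (c *: p + q) = c * u p + u q.

Definition mom (D : nat) (F : fieldType) (u : {mpoly F[D]} -> F) : smat D F :=
  fun a b => u ('X_[a] * 'X_[b]).

Definition quasidef (D : nat) (F : fieldType) (u : {mpoly F[D]} -> F) : Prop :=
  forall k : nat, \det (subml (mom u) (grl D 0 k.+1) (grl D 0 k.+1)) != 0.

Definition block_lower_unitri (D : nat) (F : fieldType) (S : smat D F) : Prop :=
  forall a b : 'X_{1..D},
    ((mdeg a < mdeg b)%N -> S a b = 0) /\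
    (mdeg a = mdeg b -> S a b = (a == b)%:R).

Definition block_diag (D : nat) (F : fieldType) (H : smat D F) : Prop :=
  forall a b : 'X_{1..D}, mdeg a != mdeg b -> H a b = 0.

(* Gauss--Borel factorization G = S^{-1} H S^{-T}, written (S lower
   unitriangular, hence invertible) as S G S^T = H; all sums are finite since
   S a c = 0 for |c| > |a|. *)
Definition GB_fact (D : nat) (F : fieldType) (G S H : smat D F) : Prop :=
  [/\ block_lower_unitri S, block_diag H &
      forall a b : 'X_{1..D},
        \sum_(c <- grl D 0 (mdeg a).+1) \sum_(d <- grl D 0 (mdeg b).+1)
          S a c * G c d * S b d = H a b].

Definition opoly (D : nat) (F : fieldType) (S : smat D F) (a : 'X_{1..D})
  : {mpoly F[D]} :=
  \sum_(c <- grl D 0 (mdeg a).+1) S a c *: 'X_[c].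

Definition Rmat (D : nat) (F : fieldType) (uc : {mpoly F[D]} -> F) (S : smat D F)
  : smat D F :=
  fun a b => uc (opoly S a * 'X_[b]).

(* Q(Lambda) = sum_m Q_m Lambda^m, with (Lambda^m)_{a,b} = delta_{a+m,b}. *)
Definition QLam (D : nat) (F : fieldType) (Q : {mpoly F[D]}) : smat D F :=
  fun a b => \sum_(m <- msupp Q) Q@_m * ((a + m)%MM == b)%:R.

(* Last block column ( H_[k-m2] ; 0 ; ... ; 0 ) of the second formula. *)
Definition Hlast (D : nat) (F : fieldType) (H : smat D F) (k m2 : nat) : smat D F :=
  fun a b => if mdeg a == (k - m2)%N then H a b else 0.

(* Main.v *)
Require Import Defs.
From HB Require Import structures.
From mathcomp Require Import all_boot all_order all_algebra.
From mathcomp Require Import reals.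
From mathcomp Require Import complex.
From mathcomp Require Import mpoly.
From mathcomp Require Import zify ring.
Set Implicit Arguments. Unset Strict Implicit. Unset Printing Implicit Defensive.
Import Order.TTheory GRing.Theory Num.Theory.
Local Open Scope ring_scope.

Section Lists.
Variable D : nat.
Implicit Types m : 'X_{1..D}.

Lemma mem_blk k m : (m \in blk D k) = (mdeg m == k).
Proof.
rewrite /blk mem_sort; apply/mapP/idP.
  by case=> x; rewrite mem_filter => /andP[e _] ->.
move=> /eqP e. have h : (mdeg m < k.+1)%N by rewrite e.
exists (BMultinom h) => //. by rewrite mem_filter /= e eqxx mem_enum.
Qed.

Lemma uniq_blk k : uniq (blk D k).
Proof.
rewrite /blk sort_uniq map_inj_uniq; last by move=> x y; apply: val_inj.
apply: filter_uniq; exact: (enum_uniq (pred_of_simpl predT)).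
Qed.

Lemma mem_grl a b m : (m \in grl D a b) = (a <= mdeg m < b)%N.
Proof.
rewrite /grl; apply/flattenP/idP.
  case=> s /mapP[l]; rewrite mem_iota => /andP[h1 h2] -> ; rewrite mem_blk => /eqP ->.
  apply/andP; split => //; lia.
move=> /andP[h1 h2]; exists (blk D (mdeg m)); last by rewrite mem_blk.
apply/mapP; exists (mdeg m) => //. rewrite mem_iota h1 /=; lia.
Qed.

Lemma uniq_grl a b : uniq (grl D a b).
Proof.
rewrite /grl; move: (b - a)%N => n; elim: n a => [|n IH] a //=.
rewrite cat_uniq uniq_blk IH /= andbT; apply/hasPn => m.
rewrite /grl => /flattenP[s /mapP[l]]; rewrite mem_iota => /andP[h1 _] ->.
by rewrite !mem_blk => /eqP ->; rewrite neq_ltn h1 orbT.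
Qed.

Lemma grl_cat a b c : (a <= b <= c)%N -> grl D a c = grl D a b ++ grl D b c.
Proof.
move=> /andP[h1 h2]; rewrite /grl -flatten_cat; congr flatten.
rewrite -map_cat; congr map.
have -> : (c - a = (b - a) + (c - b))%N by lia.
by rewrite iotaD subnKC.
Qed.
End Lists.

Lemma sum_pred1 (T : eqType) (V : zmodType) (s : seq T) (f : T -> V) m :
  uniq s -> \sum_(c <- s | c == m) f c = if m \in s then f m else 0.
Proof.
elim: s => [|x s IH] /=; first by rewrite big_nil.
move=> /andP[nx us]; rewrite big_cons IH // in_cons.
case: (eqVneq x m) nx => [<-|ne] nx /=; first by rewrite (negbTE nx) addr0.
by [].
Qed.

Lemma sum_nth (T : Type) (V : zmodType) (x0 : T) (s : seq T) (f : T -> V) :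
  \sum_(c <- s) f c = \sum_(i < size s) f (nth x0 s i).
Proof. by rewrite (big_nth x0) big_mkord. Qed.

Section Gen.
Variables (F : fieldType) (D : nat).
Local Notation mp := {mpoly F[D]}.
Implicit Types (m : 'X_{1..D}) (p q : mp).

Lemma coef_sumX (s : seq 'X_{1..D}) (f : 'X_{1..D} -> F) m : uniq s ->
  (\sum_(c <- s) f c *: 'X_[c] : mp)@_m = if m \in s then f m else 0.
Proof.
move=> us; rewrite raddf_sum /= -(sum_pred1 f m us) [RHS]big_mkcond /=.
apply: eq_bigr => c _; rewrite mcoeffZ mcoeffX.
by case: eqVneq; rewrite ?mulr1 ?mulr0.
Qed.

Definition lowd n p := forall m, m \in msupp p -> (mdeg m < n)%N.

Lemma lowd_coef n p m : lowd n p -> (n <= mdeg m)%N -> p@_m = 0.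
Proof.
move=> h hm; apply/eqP; apply: contraTT hm; rewrite -mcoeff_msupp -ltnNge.
exact: h.
Qed.

Lemma lowdP n p : lowd n p <-> (forall m, (n <= mdeg m)%N -> p@_m = 0).
Proof.
split; first by move=> h m; apply: lowd_coef.
move=> h m; rewrite mcoeff_msupp ltnNge; apply: contraNN => hm; apply/eqP; exact: h.
Qed.

Lemma lowd0 n : lowd n 0.
Proof. by apply/lowdP => m _; rewrite mcoeff0. Qed.

Lemma lowdD n p q : lowd n p -> lowd n q -> lowd n (p + q).
Proof. by move=> /lowdP hp /lowdP hq; apply/lowdP => m hm; rewrite mcoeffD hp ?hq ?addr0. Qed.

Lemma lowdN n p : lowd n p -> lowd n (- p).
Proof. by move=> /lowdP hp; apply/lowdP => m hm; rewrite mcoeffN hp ?oppr0. Qed.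

Lemma lowdB n p q : lowd n p -> lowd n q -> lowd n (p - q).
Proof. by move=> hp hq; apply: lowdD => //; apply: lowdN. Qed.

Lemma lowdZ n c p : lowd n p -> lowd n (c *: p).
Proof. by move=> /lowdP hp; apply/lowdP => m hm; rewrite mcoeffZ hp ?mulr0. Qed.

Lemma lowd_sum n (I : Type) (s : seq I) (f : I -> mp) :
  (forall i, lowd n (f i)) -> lowd n (\sum_(i <- s) f i).
Proof.
move=> h; apply: (big_ind (lowd n)) => //; [exact: lowd0 | exact: lowdD].
Qed.

Lemma lowd_sum_seq n (I : eqType) (s : seq I) (f : I -> mp) :
  (forall i, i \in s -> lowd n (f i)) -> lowd n (\sum_(i <- s) f i).
Proof.
move=> h; rewrite big_seq; apply: (big_ind (lowd n)) => //; [exact: lowd0 | exact: lowdD].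
Qed.

Lemma lowdX n m : (mdeg m < n)%N -> lowd n ('X_[m] : mp).
Proof. by move=> h m'; rewrite msuppX mem_seq1 => /eqP ->. Qed.

Lemma lowd_mono n n' p : (n <= n')%N -> lowd n p -> lowd n' p.
Proof. by move=> h hp m /hp /leq_trans; apply. Qed.

Lemma lowdMX n p m : lowd n p -> lowd (n + mdeg m) (p * 'X_[m]).
Proof.
move=> hp m'; rewrite (perm_mem (msuppMX p m)) => /mapP[m'' /hp h ->].
by rewrite mdegD addnC ltn_add2r.
Qed.

Lemma lowd_eq0 p : lowd 0 p -> p = 0.
Proof. by move=> /lowdP h; apply/mpolyP => m; rewrite mcoeff0 h. Qed.

Lemma expand_mon n p : lowd n p -> p = \sum_(c <- grl D 0 n) p@_c *: 'X_[c].
Proof.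
move=> /lowdP h; apply/mpolyP => m; rewrite coef_sumX ?uniq_grl // mem_grl /=.
by case: ltnP => // hm; rewrite h.
Qed.

Section Lin.
Variable w : mp -> F.
Hypothesis hw : lin_fun w.

Lemma lw0 : w 0 = 0.
Proof. have := hw 1 0 0; rewrite scale1r addr0 mul1r => h. by apply: (addrI (w 0)); rewrite addr0 -h. Qed.
Lemma lwD p q : w (p + q) = w p + w q.
Proof. by have := hw 1 p q; rewrite scale1r mul1r. Qed.
Lemma lwZ c p : w (c *: p) = c * w p.
Proof. by have := hw c p 0; rewrite !addr0 lw0 addr0. Qed.
Lemma lwN p : w (- p) = - w p.
Proof. by rewrite -scaleN1r lwZ mulN1r. Qed.
Lemma lwB p q : w (p - q) = w p - w q.
Proof. by rewrite lwD lwN. Qed.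
Lemma lw_sum (I : Type) (s : seq I) (f : I -> mp) :
  w (\sum_(i <- s) f i) = \sum_(i <- s) w (f i).
Proof. elim: s => [|x s IH]; by rewrite ?big_nil ?lw0 // !big_cons lwD IH. Qed.
End Lin.


Lemma sum_delta (s : seq 'X_{1..D}) (f : 'X_{1..D} -> F) m : uniq s ->
  \sum_(c <- s) f c * (c == m)%:R = if m \in s then f m else 0.
Proof.
move=> us; rewrite -(sum_pred1 f m us) [RHS]big_mkcond /=.
by apply: eq_bigr => c _; case: eqVneq; rewrite ?mulr1 ?mulr0.
Qed.

Lemma grl_S n : grl D 0 n.+1 = grl D 0 n ++ blk D n.
Proof. by rewrite (@grl_cat D 0 n n.+1) ?leqnSn // /grl subSnn /= cats0. Qed.

Section GB.
Variable S : smat D F.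
Hypothesis hS : block_lower_unitri S.

Lemma coef_opoly a m : (opoly S a)@_m = if (mdeg m <= mdeg a)%N then S a m else 0.
Proof. by rewrite /opoly coef_sumX ?uniq_grl // mem_grl /= ltnS. Qed.

Lemma opoly_coef_top a m : mdeg m = mdeg a -> (opoly S a)@_m = (a == m)%:R.
Proof. by move=> h; rewrite coef_opoly h leqnn; apply: (hS a m).2. Qed.

Lemma opoly_coef_hi a m : (mdeg a <= mdeg m)%N -> (opoly S a)@_m = (a == m)%:R.
Proof.
rewrite leq_eqVlt => /orP[/eqP h|h]; first exact: opoly_coef_top.
rewrite coef_opoly leqNgt h /=; case: eqVneq => // e.
by move: h; rewrite e ltnn.
Qed.

Lemma lowd_opoly a : lowd (mdeg a).+1 (opoly S a).
Proof. by apply/lowdP => m hm; rewrite coef_opoly leqNgt hm. Qed.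

Lemma lowd_opolyX a : lowd (mdeg a) (opoly S a - 'X_[a]).
Proof. by apply/lowdP => m hm; rewrite mcoeffB opoly_coef_hi // mcoeffX subrr. Qed.

Lemma opolyXE b : opoly S b - 'X_[b] = \sum_(c <- grl D 0 (mdeg b)) S b c *: 'X_[c].
Proof.
rewrite {1}(expand_mon (@lowd_opolyX b)); apply: eq_big_seq => c.
rewrite mem_grl /= => hc; rewrite mcoeffB coef_opoly (ltnW hc) mcoeffX.
by case: eqVneq => [e|_]; [move: hc; rewrite e ltnn | rewrite subr0].
Qed.

Lemma expandP n p : lowd n p ->
  exists d : 'X_{1..D} -> F, p = \sum_(c <- grl D 0 n) d c *: opoly S c.
Proof.
elim: n p => [|n IH] p hp.
  by exists (fun _ => 0); rewrite (lowd_eq0 hp) /grl /= big_nil.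
set q := p - \sum_(c <- blk D n) p@_c *: opoly S c.
have hq : lowd n q.
  apply/lowdP => m hm; rewrite mcoeffB raddf_sum /=.
  rewrite (eq_big_seq (fun c => p@_c * (c == m)%:R)); last first.
    by move=> c; rewrite mem_blk => /eqP hc; rewrite mcoeffZ opoly_coef_hi // hc.
  rewrite sum_delta ?uniq_blk // mem_blk; case: eqVneq => [|ne]; first by rewrite subrr.
  by rewrite subr0 (lowd_coef hp) //; rewrite ltn_neqAle eq_sym ne.
have [d' hd'] := IH q hq.
exists (fun c => if mdeg c == n then p@_c else d' c).
rewrite grl_S big_cat /=.
have ep : p = q + \sum_(c <- blk D n) p@_c *: opoly S c by rewrite /q subrK.
rewrite [LHS]ep hd'.
congr (_ + _); apply: eq_big_seq => c.
    by rewrite mem_grl /= => hc; rewrite ifN // neq_ltn hc.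
by rewrite mem_blk => ->.
Qed.

Section Orth.
Variables (w : mp -> F) (H : smat D F).
Hypothesis hw : lin_fun w.
Hypothesis hGB : GB_fact (mom w) S H.

Lemma wPP a b : w (opoly S a * opoly S b) = H a b.
Proof.
case: hGB => _ _ h; rewrite -h /opoly mulr_suml lw_sum //; apply: eq_bigr => c _.
rewrite -scalerAl lwZ // mulr_sumr lw_sum // mulr_sumr; apply: eq_bigr => d _.
by rewrite -scalerAr lwZ // /mom; ring.
Qed.

Lemma wPX_exp a b : w (opoly S a * 'X_[b]) =
  H a b - \sum_(c <- grl D 0 (mdeg b)) S b c * w (opoly S a * 'X_[c]).
Proof.
have e : 'X_[b] = opoly S b - (opoly S b - 'X_[b]) by rewrite subKr.
rewrite {1}e opolyXE mulrBr lwB // wPP mulr_sumr lw_sum //; congr (_ - _).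
by apply: eq_bigr => c _; rewrite -scalerAr lwZ.
Qed.

Lemma wPX a b : (mdeg b < mdeg a)%N -> w (opoly S a * 'X_[b]) = 0.
Proof.
suff : forall n b, (mdeg b < n)%N -> (mdeg b < mdeg a)%N -> w (opoly S a * 'X_[b]) = 0.
  by move=> h; apply: (h (mdeg b).+1).
elim=> [|n IH] {}b // hbn hba; rewrite wPX_exp.
case: hGB => _ hH _; rewrite hH; last by rewrite neq_ltn hba orbT.
rewrite big1_seq ?subrr // => c; rewrite mem_grl /= => hc.
rewrite IH ?mulr0 //; [exact: leq_trans hc _ | exact: ltn_trans hc _].
Qed.

Lemma wPXeq a b : mdeg b = mdeg a -> w (opoly S a * 'X_[b]) = H a b.
Proof.
move=> e; rewrite wPX_exp big1_seq ?subr0 // => c; rewrite mem_grl /= => hc.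
by rewrite wPX ?mulr0 // -e.
Qed.

Lemma wPXle a b : (mdeg b <= mdeg a)%N ->
  w (opoly S a * 'X_[b]) = if mdeg b == mdeg a then H a b else 0.
Proof.
rewrite leq_eqVlt => /orP[/eqP e|h]; first by rewrite e eqxx wPXeq.
by rewrite wPX // ifN // neq_ltn h.
Qed.

Lemma wPlow a p : lowd (mdeg a) p -> w (opoly S a * p) = 0.
Proof.
move=> hp; rewrite (mpolyE p) mulr_sumr lw_sum // big1_seq // => m /andP[_ hm].
by rewrite -scalerAr lwZ // wPX ?mulr0 //; apply: hp.
Qed.
End Orth.
End GB.

Lemma uniq_orth (w : mp -> F) : lin_fun w -> quasidef w -> forall n Z,
  lowd n Z -> (forall b, (mdeg b < n)%N -> w (Z * 'X_[b]) = 0) -> Z = 0.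
Proof.
move=> hw hq [|n] Z hZ hb; first exact: lowd_eq0.
set s := grl D 0 n.+1.
set G := subml (mom w) s s.
have uG : G \in unitmx by rewrite unitmxE unitfE; exact: hq n.
set z := \row_(i < size s) Z@_(nth 0%MM s i).
have zG : z *m G = 0.
  apply/rowP => j; rewrite !mxE.
  have hj : nth 0%MM s j \in s by apply: mem_nth.
  have hj' : (mdeg (nth 0%MM s j) < n.+1)%N by move: hj; rewrite mem_grl.
  apply: etrans (hb _ hj').
  rewrite [in RHS](expand_mon hZ) mulr_suml lw_sum // (sum_nth 0%MM).
  by apply: eq_bigr => i _; rewrite !mxE -scalerAl lwZ.
have z0 : z = 0 by rewrite -(mulmxK uG z) zG mul0mx.
apply/mpolyP => m; rewrite mcoeff0; case hm: (m \in s).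
  have hi : (index m s < size s)%N by rewrite index_mem.
  have := congr1 (fun M : 'rV_(size s) => M 0 (Ordinal hi)) z0.
  by rewrite !mxE /= nth_index.
by apply: (lowd_coef hZ); move: hm; rewrite mem_grl /= => /negbT; rewrite -leqNgt.
Qed.

End Gen.

Lemma lw_comb (F : fieldType) (D : nat) (w : {mpoly F[D]} -> F) : lin_fun w ->
  forall (p : {mpoly F[D]}) n (f : 'I_n -> F) (P : 'I_n -> {mpoly F[D]}) x,
  w ((p - \sum_(j < n) f j *: P j) * x) = w (p * x) - \sum_(j < n) f j * w (P j * x).
Proof.
move=> hw p n f P x; rewrite mulrBl lwB // mulr_suml lw_sum //; congr (_ - _).
by apply: eq_bigr => j _; rewrite -scalerAl lwZ.
Qed.

Lemma mpC_mulinv (F : fieldType) (D m n p : nat) (C : 'M[F]_(m, n)) (A : 'M[F]_n)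
  (B : 'M[{mpoly F[D]}]_(n, p)) :
  mpC_mx D C *m invmx (mpC_mx D A) *m B = mpC_mx D (C *m invmx A) *m B.
Proof.
rewrite /mpC_mx.
have -> : (fun c : F => c%:MP) = @mpolyC D F by [].
by rewrite map_mxM map_invmx.
Qed.

Theorem mainTheorem5 (R : realType) (D : nat)
    (u uc : {mpoly R[i][D]} -> R[i]) (Q2 : {mpoly R[i][D]}) (m2 : nat)
    (S H Sc Hc : smat D R[i]) (k : nat)
    (beta : 'I_(size (grl D (k - m2) k)) -> 'X_{1..D}) :
  lin_fun u -> lin_fun uc ->
  Q2 != 0 -> msize Q2 = m2.+1 ->
  (forall p : {mpoly R[i][D]}, uc (Q2 * p) = u p) ->
  quasidef u -> quasidef uc ->
  GB_fact (mom u) S H -> GB_fact (mom uc) Sc Hc ->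
  (m2 <= k)%N ->
  injective beta ->
  (forall j, (mdeg (beta j) < k)%N) ->
  \det (subm (Rmat uc S) (grl D (k - m2) k) beta) != 0 ->
  let Rm := Rmat uc S in
  let rows := grl D (k - m2) k in
  [/\ pcol (opoly Sc) (blk D k)
      = qdet (mpC_mx D (subm Rm rows beta)) (pcol (opoly S) rows)
             (mpC_mx D (subm Rm (blk D k) beta)) (pcol (opoly S) (blk D k)),
      subml Hc (blk D k) (blk D k) *m (subml (QLam Q2) (blk D (k - m2)) (blk D k))^T
      = qdet (subm Rm rows beta) (subml (Hlast H k m2) rows (blk D (k - m2)))
             (subm Rm (blk D k) beta) (subml (Hlast H k m2) (blk D k) (blk D (k - m2))) &
      subml Hc (blk D k) (blk D k)
      = qdet (subm Rm rows beta) (subml Rm rows (blk D k))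
             (subm Rm (blk D k) beta) (subml Rm (blk D k) (blk D k))].
Proof.
move=> hu huc _ hQs hQ qu _ GBu GBc hk _ bdeg hA Rm rows.
have hS : block_lower_unitri S by case: GBu.
have hSc : block_lower_unitri Sc by case: GBc.
set A := subm Rm rows beta.
set C := subm Rm (blk D k) beta.
have uA : A \in unitmx by rewrite unitmxE unitfE.
set K := C *m invmx A.
have KA : K *m A = C by rewrite /K mulmxKV.
have mrows : forall j : 'I_(size rows), (k - m2 <= mdeg (nth 0%MM rows j) < k)%N.
  by move=> j; rewrite -mem_grl mem_nth.
have mblk : forall i : 'I_(size (blk D k)), mdeg (nth 0%MM (blk D k) i) = k.
  by move=> i; apply/eqP; rewrite -mem_blk mem_nth.
have hQlow : lowd m2.+1 Q2 by move=> m hm; rewrite -hQs; apply: msize_mdeg_lt.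
have Pc : forall i : 'I_(size (blk D k)),
  opoly Sc (nth 0%MM (blk D k) i) = opoly S (nth 0%MM (blk D k) i)
     - \sum_(j < size rows) K i j *: opoly S (nth 0%MM rows j).
  move=> i; set a := nth 0%MM (blk D k) i; have ha : mdeg a = k := mblk i.
  apply/eqP; rewrite -subr_eq0; apply/eqP.
  set W := _ - _.
  have hW : lowd k W.
    have -> : W = (opoly Sc a - 'X_[a]) - (opoly S a - 'X_[a])
        + \sum_(j < size rows) K i j *: opoly S (nth 0%MM rows j) by rewrite /W; ring.
    apply: lowdD; first by apply: lowdB; rewrite -ha; [apply: (@lowd_opolyX _ _ Sc hSc a) | apply: (@lowd_opolyX _ _ S hS a)].
    apply: lowd_sum => j; apply: lowdZ; apply: (lowd_mono _ (@lowd_opoly _ _ S _)).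
    by case/andP: (mrows j).
  have [d hd] := expandP hS hW.
  have hg : grl D 0 k = grl D 0 (k - m2) ++ rows by rewrite (@grl_cat D 0 (k - m2) k) // leq_subr.
  rewrite hg big_cat /= in hd.
  set Wlo := \sum_(c <- grl D 0 (k - m2)) d c *: opoly S c in hd.
  set Whi := \sum_(c <- rows) d c *: opoly S c in hd.
  have hlo : Wlo = 0.
    apply: (uniq_orth hu qu (n := (k - m2)%N)).
      apply: lowd_sum_seq => c; rewrite mem_grl => /andP[_ hc]; apply: lowdZ.
      exact: lowd_mono hc (@lowd_opoly _ _ S c).
    move=> b hb; have e : Wlo = W - Whi by rewrite hd addrK.
    rewrite e mulrBl lwB //.
    have -> : u (Whi * 'X_[b]) = 0.
      rewrite mulr_suml lw_sum // big1_seq // => c /andP[_]; rewrite mem_grl => /andP[hc _].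
      by rewrite -scalerAl lwZ // (wPX hS hu GBu) ?mulr0 //; exact: leq_trans hb hc.
    rewrite /W mulrBl lwB // lw_comb //.
    rewrite -[u (opoly Sc a * _)]hQ mulrCA (wPlow hSc huc GBc); last first.
      rewrite ha; apply: lowd_mono (@lowdMX _ _ _ _ b hQlow); lia.
    rewrite (wPX hS hu GBu); last by rewrite ha; lia.
    rewrite big1 ?subrr ?oppr0 ?subr0 // => j _; rewrite (wPX hS hu GBu) ?mulr0 //.
    by case/andP: (mrows j) => h _; exact: leq_trans hb h.
  rewrite hd hlo add0r /Whi (sum_nth 0%MM).
  set dv := \row_(j < size rows) d (nth 0%MM rows j).
  have dA : dv *m A = 0.
    apply/rowP => j'; rewrite !mxE.
    have e1 : uc (W * 'X_[beta j']) = \sum_j dv 0 j * A j j'.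
      rewrite hd hlo add0r /Whi (sum_nth 0%MM) mulr_suml lw_sum //; apply: eq_bigr => j _.
      by rewrite -scalerAl lwZ // !mxE.
    rewrite -e1 /W mulrBl lwB // lw_comb //.
    rewrite (wPX hSc huc GBc); last by rewrite ha.
    have -> : uc (opoly S a * 'X_[beta j']) = C i j' by rewrite /C mxE.
    rewrite -KA mxE.
    rewrite [X in _ - X](_ : _ = 0) ?subrr //; apply/eqP; rewrite subr_eq0; apply/eqP.
    by apply: eq_bigr => j _; congr (_ * _); rewrite /A mxE.
  have dv0 : dv = 0 by rewrite -(mulmxK uA dv) dA mul0mx.
  apply: big1 => j _; have := congr1 (fun M : 'rV_(size rows) => M 0 j) dv0.
  by rewrite !mxE => ->; rewrite scale0r.
split.
- rewrite /qdet mpC_mulinv -/K; apply/matrixP => i j; rewrite !mxE Pc.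
  by congr (_ - _); apply: eq_bigr => l _; rewrite !mxE mul_mpolyC.
- apply/matrixP => i g; rewrite /qdet -/K !mxE.
  set a := nth 0%MM (blk D k) i; set y := nth 0%MM (blk D (k - m2)) g.
  have ha : mdeg a = k := mblk i.
  have hy : mdeg y = (k - m2)%N by apply/eqP; rewrite -mem_blk mem_nth.
  have hHl : forall x, (k - m2 <= mdeg x)%N -> u (opoly S x * 'X_[y]) = Hlast H k m2 x y.
    by move=> x hx; rewrite (wPXle hS hu GBu) ?hy // /Hlast eq_sym.
  have eQ : Q2 * 'X_[y] = \sum_(m <- msupp Q2) Q2@_m *: 'X_[(y + m)%MM].
    rewrite {1}(mpolyE Q2) mulr_suml; apply: eq_bigr => m _.
    by rewrite -scalerAl -mpolyXD addmC.
  have eR : u (opoly Sc a * 'X_[y]) = \sum_(m <- msupp Q2)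
      Q2@_m * (if mdeg (y + m)%MM == k then Hc a (y + m)%MM else 0).
    rewrite -hQ (mulrCA Q2) eQ mulr_sumr lw_sum //; apply: eq_big_seq => m hm.
    rewrite -scalerAr lwZ // (wPXle hSc huc GBc) ha //.
    by rewrite mdegD hy; have := hQlow m hm; lia.
  transitivity (u (opoly Sc a * 'X_[y])); last first.
    rewrite Pc lw_comb // hHl ?ha ?leq_subr //; congr (_ - _).
    apply: eq_bigr => l _; rewrite !mxE hHl //; by case/andP: (mrows l).
  rewrite eR.
  transitivity (\sum_(b <- blk D k) Hc a b * QLam Q2 y b).
    by rewrite (sum_nth 0%MM); apply: eq_bigr => j _; rewrite !mxE.
  rewrite /QLam; under eq_bigr do rewrite mulr_sumr.
  rewrite exchange_big /=; apply: eq_bigr => m _.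
  transitivity (Q2@_m * \sum_(b <- blk D k) Hc a b * (b == (y + m)%MM)%:R).
    by rewrite mulr_sumr; apply: eq_bigr => b _; rewrite mulrCA eq_sym.
  by rewrite sum_delta ?uniq_blk // mem_blk.
- apply/matrixP => i j; rewrite /qdet -/K !mxE.
  rewrite -(wPXeq hSc huc GBc); last by rewrite !mblk.
  rewrite Pc lw_comb //; congr (_ - _).
  by apply: eq_bigr => l _; rewrite !mxE.
Qed.
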